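(* As $r\to0$, $\zeta_0(r)=\frac2\pi+O(r^2)$ and $\zeta_2(r)=\frac2\pi+O(r^2)$. As $r\to\infty$, $\zeta_0(r)=\frac{A_0}{r}(1+O(1/r^2))$ and $\zeta_2(r)=\frac{A_2}{r^3}(1+O(1/r^2))$.
   Context: $\phi(t)=\frac{1}{\sqrt{2\pi}}e^{-t^2/2}$, $Q(x)=\int_x^\infty\phi(t)dt$, $\xi(s):=\frac{\phi^2(s)}{Q(s)(1-Q(s))}$, and $\zeta_k(t):=\mathbb{E}[S^k\xi(tS)]$ for $S\sim\mathcal{N}(0,1)$. $A_0:=\frac{1}{\sqrt{2\pi}}\int_{-\infty}^{\infty}\xi(u)du$ and $A_2:=\frac{1}{\sqrt{2\pi}}\int_{-\infty}^{\infty}\xi(u)u^2du$. *)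

(* Defs.v *)
From Stdlib Require Import Reals.
From Coquelicot Require Import Coquelicot.
Open Scope R_scope.

Definition phi (t : R) : R := / sqrt (2 * PI) * exp (- t ^ 2 / 2).

Definition Q (x : R) : R :=
  RInt_gen phi (at_point x) (Rbar_locally p_infty).

Definition xi (s : R) : R := (phi s) ^ 2 / (Q s * (1 - Q s)).

(* zeta_k(t) = E[S^k xi(t S)], S ~ N(0,1), written as the integral
   against the standard normal density over the whole real line. *)
Definition zeta (k : nat) (t : R) : R :=
  RInt_gen (fun s => s ^ k * xi (t * s) * phi s)
    (Rbar_locally m_infty) (Rbar_locally p_infty).

Definition A0 : R :=
  / sqrt (2 * PI) * RInt_gen xi (Rbar_locally m_infty) (Rbar_locally p_infty).

Definition A2 : R :=
  / sqrt (2 * PI) *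
  RInt_gen (fun u => xi u * u ^ 2) (Rbar_locally m_infty) (Rbar_locally p_infty).

(* Main.v *)
Require Import Defs.
From Stdlib Require Import Reals Lra Lia Psatz.
From Coquelicot Require Import Coquelicot.
Open Scope R_scope.

Definition HL (f : R -> R) (L : R) := is_lim (fun b => RInt f 0 b) p_infty L.
Definition cont (f : R -> R) := forall x, continuous f x.

Lemma cont_ex f a b : cont f -> ex_RInt f a b.
Proof. intros H; apply (ex_RInt_continuous (V:=R_CompleteNormedModule)); intros; apply H. Qed.

Lemma gen_right (f : R -> R) (x L : R) : cont f -> is_lim (fun b => RInt f x b) p_infty L ->
  is_RInt_gen f (at_point x) (Rbar_locally p_infty) L.
Proof.
intros Hc Hl P HP.
apply Filter_prod with (fun a => a = x) (fun b => P (RInt f x b)).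
- reflexivity.
- exact (Hl P HP).
- intros a b -> Hb. exists (RInt f x b). split; [apply (RInt_correct (V:=R_CompleteNormedModule)), cont_ex, Hc|exact Hb].
Qed.

Lemma gen_left (f : R -> R) (x L : R) : cont f -> is_lim (fun a => RInt f a x) m_infty L ->
  is_RInt_gen f (Rbar_locally m_infty) (at_point x) L.
Proof.
intros Hc Hl P HP.
apply Filter_prod with (fun a => P (RInt f a x)) (fun b => b = x).
- exact (Hl P HP).
- reflexivity.
- intros a b Ha ->. exists (RInt f a x). split; [apply (RInt_correct (V:=R_CompleteNormedModule)), cont_ex, Hc|exact Ha].
Qed.

Lemma RInt_even f a : cont f -> (forall x, f (- x) = f x) -> RInt f a 0 = RInt f 0 (- a).
Proof.
intros Hc He.
assert (H := RInt_comp_lin f (-1) 0 0 a).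
replace (-1 * 0 + 0) with 0 in H by ring.
replace (-1 * a + 0) with (- a) in H by ring.
rewrite <- H by (apply cont_ex; auto).
rewrite (RInt_ext (fun y => scal (-1) (f (-1 * y + 0))) (fun y => opp (f y))).
2:{ intros x _. unfold scal; simpl; unfold mult; simpl.
    replace (-1 * x + 0) with (- x) by ring. rewrite He. unfold opp; simpl; ring. }

rewrite (RInt_opp (V:=R_CompleteNormedModule)) by (apply cont_ex; auto).
symmetry; apply (opp_RInt_swap (V:=R_CompleteNormedModule)), cont_ex; auto.
Qed.

Lemma HL_full (f : R -> R) (L : R) : cont f -> (forall x, f (- x) = f x) -> HL f L ->
  is_RInt_gen f (Rbar_locally m_infty) (Rbar_locally p_infty) (2 * L).
Proof.
intros Hc He Hl.
replace (2 * L) with (plus L L) by (unfold plus; simpl; ring).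
apply (is_RInt_gen_Chasles (V:=R_NormedModule)) with 0.
- apply gen_left; auto.
  eapply is_lim_ext_loc.
  + exists 0. intros a _. symmetry. apply RInt_even; auto.
  + intros P HP. destruct (Hl P HP) as [M HM]. exists (- M). intros a Ha. apply HM. lra.
- apply gen_right; auto.
Qed.

Lemma RInt_gen_full (f : R -> R) (L : R) : cont f -> (forall x, f (- x) = f x) -> HL f L ->
  RInt_gen f (Rbar_locally m_infty) (Rbar_locally p_infty) = 2 * L.
Proof.
intros; apply (is_RInt_gen_unique (V:=R_CompleteNormedModule)), HL_full; auto.
Qed.

Lemma HL_unique f L1 L2 : HL f L1 -> HL f L2 -> L1 = L2.
Proof.
intros H1 H2. apply is_lim_unique in H1. apply is_lim_unique in H2.
rewrite H1 in H2. injection H2; auto.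
Qed.

Lemma HL_ext f g L : (forall x, 0 <= x -> f x = g x) -> HL f L -> HL g L.
Proof.
intros He Hl. eapply is_lim_ext_loc; [|exact Hl].
exists 0. intros b Hb. apply RInt_ext. intros x Hx.
rewrite Rmin_left in Hx by lra. apply He. lra.
Qed.

Lemma HL_plus f g Lf Lg : cont f -> cont g -> HL f Lf -> HL g Lg ->
  HL (fun x => f x + g x) (Lf + Lg).
Proof.
intros Hf Hg H1 H2. unfold HL.
eapply is_lim_ext_loc.
- exists 0. intros b _. symmetry. apply (RInt_plus (V:=R_CompleteNormedModule) f g); apply cont_ex; auto.
- apply (is_lim_plus _ _ _ Lf Lg); auto. apply (Rbar_plus_correct Lf Lg); exact I.
Qed.

Lemma HL_scal k f L : cont f -> HL f L -> HL (fun x => k * f x) (k * L).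
Proof.
intros Hf H. unfold HL.
eapply is_lim_ext_loc.
- exists 0. intros b _. symmetry. apply (RInt_scal (V:=R_CompleteNormedModule) f 0 b k); apply cont_ex; auto.
- apply (is_lim_scal_l _ k _ L); auto.
Qed.

Lemma HL_abs_le f g Lf Lg : cont f -> cont g ->
  (forall x, 0 <= x -> Rabs (f x) <= g x) -> HL f Lf -> HL g Lg -> Rabs Lf <= Lg.
Proof.
intros Hf Hg Hb H1 H2.
assert (Ha : is_lim (fun b => Rabs (RInt f 0 b)) p_infty (Rabs Lf)).
{ apply (is_lim_comp_continuous (fun b => RInt f 0 b) Rabs p_infty Lf); auto.
  apply continuous_Rabs. }
refine (is_lim_le_loc _ _ _ _ _ _ Ha H2).
exists 0. intros b Hb0.
eapply Rle_trans. apply abs_RInt_le; [lra|apply cont_ex; auto].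
apply RInt_le; [lra| | |].
- apply cont_ex. intro; apply (continuous_comp f Rabs); [apply Hf|apply continuous_Rabs].
- apply cont_ex; auto.
- intros; apply Hb; lra.
Qed.

Lemma HL_le_const f L c b0 : cont f -> 0 <= b0 ->
  (forall x, 0 <= x -> 0 <= f x) -> RInt f 0 b0 = c -> HL f L -> c <= L.
Proof.
intros Hf Hb0 Hp Hc H.
assert (Hk : is_lim (fun _ => c) p_infty c) by apply is_lim_const.
refine (is_lim_le_loc _ _ _ _ _ _ Hk H).
exists b0. intros b Hb. rewrite <- Hc.
rewrite <- (RInt_Chasles (V:=R_CompleteNormedModule) f 0 b0 b) by (apply cont_ex; auto).
unfold plus; simpl.
assert (0 <= RInt f b0 b). { apply RInt_ge_0; [lra|apply cont_ex; auto|intros; apply Hp; lra]. }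
lra.
Qed.


Lemma HL_dom_ex f g Lg : cont f -> cont g ->
  (forall x, 0 <= x -> Rabs (f x) <= g x) -> HL g Lg -> exists L, HL f L.
Proof.
intros Hf Hg Hb H2.
assert (Hc : exists y : R, filterlim (fun b => RInt f 0 b) (Rbar_locally p_infty) (locally y)).
{ apply (filterlim_locally_cauchy (U := R_CompleteSpace) (F := Rbar_locally p_infty)).
  intros eps.
  assert (He : 0 < eps / 2) by (destruct eps; simpl; lra).
  destruct (H2 (fun y => Rabs (y - Lg) < eps / 2)) as [M HM].
  { exists (mkposreal _ He). intros y Hy. exact Hy. }
  exists (fun b => Rmax M 0 < b). split.
  { exists (Rmax M 0). auto. }
  intros u v Hu Hv.
  assert (HMu := HM u (Rle_lt_trans _ _ _ (Rmax_l M 0) Hu)).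
  assert (HMv := HM v (Rle_lt_trans _ _ _ (Rmax_l M 0) Hv)).
  simpl in HMu, HMv.
  assert (u0 : 0 < u) by (eapply Rle_lt_trans; [apply Rmax_r|exact Hu]).
  assert (v0 : 0 < v) by (eapply Rle_lt_trans; [apply Rmax_r|exact Hv]).
  change (Rabs (RInt f 0 v - RInt f 0 u) < eps).
  rewrite <- (RInt_Chasles (V:=R_CompleteNormedModule) f 0 u v) by (apply cont_ex; auto).
  rewrite <- (RInt_Chasles (V:=R_CompleteNormedModule) g 0 u v) in HMv by (apply cont_ex; auto).
  unfold plus in *; simpl in *.
  change (Rabs (RInt f 0 u + RInt f u v - RInt f 0 u) < eps).
  rewrite (Rplus_comm (RInt f 0 u)); unfold Rminus; rewrite Rplus_assoc, Rplus_opp_r, Rplus_0_r.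
  assert (Hgf : forall a b, 0 <= a <= b -> Rabs (RInt f a b) <= RInt g a b).
  { intros a b Hab.
    eapply Rle_trans. apply abs_RInt_le; [lra|apply cont_ex; auto].
    apply RInt_le; [lra| | |].
    - apply cont_ex. intro; apply (continuous_comp f Rabs); [apply Hf|apply continuous_Rabs].
    - apply cont_ex; auto.
    - intros; apply Hb; lra. }
  destruct (Rle_dec u v).
  - assert (H := Hgf u v (conj (Rlt_le _ _ u0) r)).
    apply Rle_lt_trans with (1 := H).
    assert (Rabs (RInt g 0 u + RInt g u v - Lg) < eps/2) by exact HMv.
    assert (Rabs (RInt g 0 u - Lg) < eps/2) by exact HMu.
    revert H0 H1. unfold Rabs. repeat destruct Rcase_abs; intros; lra.
  - rewrite <- (opp_RInt_swap (V:=R_CompleteNormedModule)) by (apply cont_ex; auto).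
    unfold opp; simpl. rewrite Rabs_Ropp.
    assert (H := Hgf v u (conj (Rlt_le _ _ v0) (Rlt_le _ _ (Rnot_le_lt _ _ n)))).
    apply Rle_lt_trans with (1 := H).
    rewrite <- (opp_RInt_swap (V:=R_CompleteNormedModule) g v u) in HMv by (apply cont_ex; auto).
    unfold opp in HMv; simpl in HMv.
    assert (Rabs (RInt g 0 u + - RInt g v u - Lg) < eps/2) by exact HMv.
    assert (Rabs (RInt g 0 u - Lg) < eps/2) by exact HMu.
    revert H0 H1. unfold Rabs. repeat destruct Rcase_abs; intros; lra. }
destruct Hc as [y Hy]. exists y. exact Hy.
Qed.

Lemma HL_exp : HL (fun x => exp (- x)) 1.
Proof.
unfold HL.
eapply is_lim_ext_loc.
- exists 0. intros b _. symmetry.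
  apply is_RInt_unique.
  apply (is_RInt_derive (fun x => - exp (- x)) (fun x => exp (- x))).
  + intros x _. auto_derive; auto. ring.
  + intros x _. apply (ex_derive_continuous (K:=R_AbsRing) (V:=R_NormedModule) (fun x => exp (- x))). auto_derive; auto.
- assert (H0 : is_lim (fun b => exp (- b)) p_infty 0).
  { apply (is_lim_comp exp (fun x => - x) p_infty 0 m_infty).
    * apply is_lim_exp_m.
    * apply (is_lim_opp (fun x => x) p_infty p_infty). apply is_lim_id.
    * exists 0. intros; discriminate. }
  apply (is_lim_ext (fun b => 1 + (-1) * exp (- b))).
  { intros y. unfold minus, plus, opp; simpl. rewrite Ropp_0, exp_0. ring. }
  replace (Finite 1) with (Rbar_plus 1 (Rbar_mult (-1) 0)) by (simpl; f_equal; ring).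
  apply (is_lim_plus _ _ p_infty 1 (Rbar_mult (-1) 0)).
  + apply is_lim_const.
  + apply (is_lim_scal_l _ (-1) p_infty 0). exact H0.
  + simpl. apply (Rbar_plus_correct 1 (Rbar_mult (-1) 0)); exact I.
Qed.

Lemma cont_expm : cont (fun x => exp (- x)).
Proof. intro x. apply (ex_derive_continuous (K:=R_AbsRing) (V:=R_NormedModule) (fun x => exp (- x))). auto_derive; auto. Qed.

Lemma HL_domC f C : cont f -> (forall x, 0 <= x -> Rabs (f x) <= C * exp (- x)) ->
  exists L, HL f L.
Proof.
intros Hf Hb. apply (HL_dom_ex f (fun x => C * exp (- x)) (C * 1)); auto.
- intro x. apply (continuous_scal_r (K:=R_AbsRing) (V:=R_NormedModule) C (fun x => exp (- x))).
  apply cont_expm.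
- apply HL_scal. apply cont_expm. apply HL_exp.
Qed.

Lemma HL_scale f L r : cont f -> 0 < r -> HL f L -> HL (fun s => f (r * s)) (L / r).
Proof.
intros Hf Hr Hl. unfold HL.
apply (is_lim_ext (fun b => / r * RInt f 0 (r * b))).
{ intros b.
  assert (H := RInt_comp_lin f r 0 0 b).
  replace (r * 0 + 0) with 0 in H by ring.
  replace (r * b + 0) with (r * b) in H by ring.
  rewrite <- H by (apply cont_ex; auto).
  rewrite <- (RInt_scal (V:=R_CompleteNormedModule)).
  2:{ apply cont_ex. intro x. apply (continuous_scal_r (K:=R_AbsRing) (V:=R_NormedModule) r (fun y => f (r * y + 0))).
      apply (continuous_comp (fun y => r * y + 0) f).
      - apply (ex_derive_continuous (K:=R_AbsRing) (V:=R_NormedModule) (fun y => r * y + 0)). auto_derive; auto.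
      - apply Hf. }
  apply RInt_ext. intros x _. unfold scal; simpl; unfold mult; simpl.
  replace (r * x + 0) with (r * x) by ring. field. lra. }
replace (Finite (L / r)) with (Rbar_mult (/ r) L) by (simpl; f_equal; unfold Rdiv; ring).
apply (is_lim_scal_l _ (/ r) p_infty L).
intros P HP. destruct (Hl P HP) as [M HM]. exists (M / r). intros x Hx. apply HM.
apply (Rmult_lt_compat_l r) in Hx; auto. replace (r * (M / r)) with M in Hx by (field; lra). exact Hx.
Qed.


Ltac req := match goal with |- ?a = ?b => change (@eq R a b) end.

Definition e2 (t : R) := exp (- t ^ 2 / 2).
Definition ffg (u t : R) := exp (- (u ^ 2 * (1 + t ^ 2)) / 2) / (1 + t ^ 2).
Definition Tg (x : R) := RInt (fun t => ffg x t) 0 1.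
Definition Gg (x : R) := RInt e2 0 x.

Lemma RInt_mulk (f : R -> R) k a b : ex_RInt f a b -> RInt (fun t => k * f t) a b = k * RInt f a b.
Proof. intros; apply (RInt_scal (V:=R_CompleteNormedModule)); auto. Qed.

Lemma pos1t t : 0 < 1 + t ^ 2.
Proof. nra. Qed.

Lemma cont_e2 : cont e2.
Proof. intro x. apply (ex_derive_continuous (K:=R_AbsRing) (V:=R_NormedModule) e2). unfold e2. auto_derive; auto. Qed.

Lemma cont_ffg x : cont (ffg x).
Proof. intro t. apply (ex_derive_continuous (K:=R_AbsRing) (V:=R_NormedModule) (ffg x)). unfold ffg. auto_derive.
  generalize (pos1t t); intros; repeat split; auto; lra. Qed.

Lemma Derive_ffg u v : Derive (fun z => ffg z v) u = - u * exp (- (u ^ 2 * (1 + v ^ 2)) / 2).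
Proof.
apply is_derive_unique. unfold ffg. generalize (pos1t v); intro.
auto_derive. lra.
replace (exp (- (u * (u * 1) * (1 + v * (v * 1))) * / 2)) with (exp (- (u ^ 2 * (1 + v ^ 2)) / 2)) by (f_equal; field).
field. lra.
Qed.

Lemma cont2_dffg x t : continuity_2d_pt (fun u v => Derive (fun z => ffg z v) u) x t.
Proof.
apply (continuity_2d_pt_ext (fun u v => (- u) * exp ((u * u * (1 + v * v)) * (- / 2)))).
{ intros u v. rewrite Derive_ffg. f_equal. f_equal. field. }
apply continuity_2d_pt_mult.
- apply continuity_2d_pt_opp, continuity_2d_pt_id1.
- apply (continuity_1d_2d_pt_comp exp (fun u v => u * u * (1 + v * v) * - / 2)).
  + apply continuity_pt_filterlim. apply continuous_exp.
  + repeat apply continuity_2d_pt_mult; try apply continuity_2d_pt_id1; try apply continuity_2d_pt_const.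
    apply continuity_2d_pt_plus. apply continuity_2d_pt_const.
    apply continuity_2d_pt_mult; apply continuity_2d_pt_id2.
Qed.

Lemma e2_mul x t : exp (- (x ^ 2 * (1 + t ^ 2)) / 2) = e2 x * e2 (x * t).
Proof. unfold e2. rewrite <- exp_plus. f_equal. field. Qed.

Lemma Tg_derive (x : R) : is_derive Tg x (- e2 x * Gg x).
Proof.
unfold Tg.
assert (H := is_derive_RInt_param ffg 0 1 x).
replace (- e2 x * Gg x) with (RInt (fun t => Derive (fun u => ffg u t) x) 0 1).
- apply H.
  + apply filter_forall. intros y t _. unfold ffg. generalize (pos1t t); intro. auto_derive. lra.
  + intros t _. apply cont2_dffg.
  + apply filter_forall. intros y. apply cont_ex, cont_ffg.
- rewrite (RInt_ext _ (fun t => (- x * e2 x) * e2 (x * t))).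
  2:{ intros t _. rewrite (Derive_ffg x t), (e2_mul x t). rewrite Rmult_assoc; reflexivity. }
  rewrite (RInt_mulk (fun t => e2 (x * t)) (- x * e2 x) 0 1).
  2:{ apply cont_ex. intro t. apply (continuous_comp (fun t => x * t) e2).
      apply (ex_derive_continuous (K:=R_AbsRing) (V:=R_NormedModule) (fun t => x * t)); auto_derive; auto.
      apply cont_e2. }
  unfold Gg.
  assert (Hc := RInt_comp_lin e2 x 0 0 1).
  replace (x * 0 + 0) with 0 in Hc by ring. replace (x * 1 + 0) with x in Hc by ring.
  rewrite <- Hc by (apply cont_ex, cont_e2).
  rewrite (RInt_ext (fun y => scal x (e2 (x * y + 0))) (fun y => x * e2 (x * y))).
  2:{ intros; unfold scal; simpl; unfold mult; simpl. rewrite Rplus_0_r; reflexivity. }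
  rewrite (RInt_mulk (fun t => e2 (x * t)) x 0 1).
  2:{ apply cont_ex. intro t. apply (continuous_comp (fun t => x * t) e2).
      apply (ex_derive_continuous (K:=R_AbsRing) (V:=R_NormedModule) (fun t => x * t)); auto_derive; auto.
      apply cont_e2. }
  match goal with |- ?a = ?b => change (@eq R a b) end; ring.
Qed.

Lemma Gg_derive (x : R) : is_derive Gg x (e2 x).
Proof.
unfold Gg. apply (is_derive_RInt (V:=R_NormedModule) e2 (RInt e2 0) 0 x).
- apply filter_forall. intro b. apply (RInt_correct (V:=R_CompleteNormedModule)), cont_ex, cont_e2.
- apply cont_e2.
Qed.

Definition hg x := 2 * Tg x + Gg x * Gg x.

Lemma hg_derive (x : R) : is_derive hg x 0.
Proof.
unfold hg.
replace 0 with (plus (2 * (- e2 x * Gg x)) (plus (mult (e2 x) (Gg x)) (mult (Gg x) (e2 x)))).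
2:{ unfold plus, mult; simpl. ring. }
apply (is_derive_plus (K:=R_AbsRing) (V:=R_NormedModule) (fun x => 2 * Tg x) (fun x => Gg x * Gg x)).
- apply is_derive_scal, Tg_derive.
- apply (is_derive_mult Gg Gg). apply Gg_derive. apply Gg_derive. intros; unfold mult; simpl; ring.
Qed.

Lemma hg_const x : hg x = hg 0.
Proof.
assert (H := is_RInt_derive (V:=R_CompleteNormedModule) hg (fun _ => 0) 0 x).
assert (H1 : is_RInt (fun _ : R => 0) 0 x (minus (hg x) (hg 0))).
{ apply H. intros; apply hg_derive. intros; apply continuous_const. }
assert (H2 := is_RInt_const (V:=R_NormedModule) 0 x 0).
apply (is_RInt_unique (V:=R_CompleteNormedModule)) in H1. apply (is_RInt_unique (V:=R_CompleteNormedModule)) in H2. rewrite H1 in H2.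
unfold minus, plus, opp, scal in H2; simpl in H2; unfold mult in H2; simpl in H2. lra.
Qed.

Lemma hg0 : hg 0 = PI / 2.
Proof.
unfold hg, Tg, Gg. rewrite RInt_point.
rewrite (RInt_ext _ (fun t => / (1 + t ^ 2))).
2:{ intros t _. unfold ffg. replace (- (0 ^ 2 * (1 + t ^ 2)) / 2) with 0 by field. rewrite exp_0. req; field.
    generalize (pos1t t); lra. }
rewrite (is_RInt_unique _ 0 1 (minus (atan 1) (atan 0))).
- unfold minus, plus, opp; simpl. rewrite atan_1, atan_0. unfold zero; simpl. field.
- apply (is_RInt_derive (V:=R_CompleteNormedModule) atan).
  + intros. apply is_derive_Reals, derivable_pt_lim_atan.
  + intros t _. apply (ex_derive_continuous (K:=R_AbsRing) (V:=R_NormedModule)). auto_derive.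
    generalize (pos1t t); lra.
Qed.


Lemma exp_le a b : a <= b -> exp a <= exp b.
Proof. intros [H|H]. left; apply exp_increasing; auto. subst; lra. Qed.

Lemma e2_pos x : 0 < e2 x.
Proof. apply exp_pos. Qed.

Lemma e2_le1 x : e2 x <= 1.
Proof. unfold e2. rewrite <- exp_0. apply exp_le. nra. Qed.

Lemma Tg_bounds x : 0 <= Tg x <= e2 x.
Proof.
unfold Tg. split.
- apply RInt_ge_0; [lra|apply cont_ex, cont_ffg|].
  intros t _. unfold ffg. apply Rlt_le, Rdiv_lt_0_compat; [apply exp_pos|apply pos1t].
- replace (e2 x) with (RInt (fun _ => e2 x) 0 1).
  2:{ rewrite RInt_const. unfold scal; simpl; unfold mult; simpl. req; ring. }
  apply RInt_le; [lra|apply cont_ex, cont_ffg|apply cont_ex; intro; apply continuous_const|].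
  intros t _. unfold ffg. rewrite e2_mul.
  generalize (e2_pos x) (e2_pos (x * t)) (e2_le1 (x * t)) (pos1t t). intros.
  set (a := e2 x) in *. set (b := e2 (x * t)) in *. set (c := 1 + t ^ 2) in *.
  assert (Hi: / c <= 1) by (rewrite <- Rinv_1; apply Rinv_le_contravar; unfold c in *; nra).
  assert (0 < / c) by (apply Rinv_0_lt_compat; lra).
  clearbody a b c. unfold Rdiv. assert (b * / c <= 1) by nra. nra.
Qed.

Lemma expm_lim : is_lim (fun b => exp (- b)) p_infty 0.
Proof.
apply (is_lim_comp exp (fun x => - x) p_infty 0 m_infty).
* apply is_lim_exp_m.
* apply (is_lim_opp (fun x => x) p_infty p_infty). apply is_lim_id.
* exists 0. intros; discriminate.
Qed.

Lemma e2_lim : is_lim e2 p_infty 0.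
Proof.
apply (is_lim_le_le_loc (fun _ => 0) (fun b => exp (- b))).
- exists 2. intros b Hb. split. apply Rlt_le, e2_pos. unfold e2. apply exp_le. nra.
- apply is_lim_const.
- apply expm_lim.
Qed.

Lemma Tg_lim : is_lim Tg p_infty 0.
Proof.
apply (is_lim_le_le_loc (fun _ => 0) e2).
- exists 0. intros b Hb. apply Tg_bounds.
- apply is_lim_const.
- apply e2_lim.
Qed.

Lemma Gg_nonneg x : 0 <= x -> 0 <= Gg x.
Proof.
intros Hx. unfold Gg. apply RInt_ge_0; [lra|apply cont_ex, cont_e2|]. intros; apply Rlt_le, e2_pos.
Qed.

Lemma Gg_sqrt x : 0 <= x -> Gg x = sqrt (PI / 2 - 2 * Tg x).
Proof.
intros Hx. rewrite <- (sqrt_square (Gg x)) by (apply Gg_nonneg; auto).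
f_equal. rewrite <- hg0, <- (hg_const x). unfold hg. ring.
Qed.

Lemma HL_e2 : HL e2 (sqrt (PI / 2)).
Proof.
unfold HL. fold (Gg). 
apply (is_lim_ext_loc (fun x => sqrt (PI / 2 - 2 * Tg x))).
{ exists 0. intros; symmetry; apply Gg_sqrt; lra. }
replace (sqrt (PI / 2)) with (sqrt (PI / 2 - 2 * 0)) by (f_equal; ring).
apply (is_lim_comp_continuous (fun x => PI / 2 - 2 * Tg x) sqrt p_infty (PI / 2 - 2 * 0)).
- apply (is_lim_ext (fun x => PI / 2 + (-2) * Tg x)). { intros; ring. }
  replace (Finite (PI / 2 - 2 * 0)) with (Rbar_plus (PI / 2) (Rbar_mult (-2) 0)) by (simpl; f_equal; ring).
  apply (is_lim_plus _ _ p_infty (PI / 2) (Rbar_mult (-2) 0)).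
  + apply is_lim_const.
  + apply (is_lim_scal_l _ (-2) p_infty 0). exact Tg_lim.
  + apply (Rbar_plus_correct (PI / 2) (Rbar_mult (-2) 0)); exact I.
- apply continuous_sqrt.
Qed.

Definition phi0 := / sqrt (2 * PI).

Lemma phi_e2 x : phi x = phi0 * e2 x.
Proof. reflexivity. Qed.

Lemma sqrt2PI : sqrt (2 * PI) = 2 * sqrt (PI / 2).
Proof.
replace (2 * PI) with ((2 * 2) * (PI / 2)) by field.
rewrite sqrt_mult; [|lra|generalize PI_RGT_0; lra].
rewrite sqrt_square; lra.
Qed.

Lemma sqrtPI2_pos : 0 < sqrt (PI / 2).
Proof. apply sqrt_lt_R0. generalize PI_RGT_0; lra. Qed.

Lemma phi0_pos : 0 < phi0.
Proof. unfold phi0. rewrite sqrt2PI. generalize sqrtPI2_pos; intro. apply Rinv_0_lt_compat. lra. Qed.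

Lemma phi0_sq : phi0 * phi0 = / (2 * PI).
Proof. unfold phi0. rewrite <- Rinv_mult. rewrite sqrt_sqrt; auto. generalize PI_RGT_0; lra. Qed.

Lemma cont_phi : cont phi.
Proof. intro x. apply (ex_derive_continuous (K:=R_AbsRing) (V:=R_NormedModule) phi). unfold phi. auto_derive; auto. Qed.

Lemma HL_phi : HL phi (1 / 2).
Proof.
replace (1 / 2) with (phi0 * sqrt (PI / 2)).
- apply (HL_ext (fun x => phi0 * e2 x)). { intros; reflexivity. }
  apply HL_scal. apply cont_e2. apply HL_e2.
- unfold phi0. rewrite sqrt2PI. generalize sqrtPI2_pos; intro. field. lra.
Qed.


Definition Pf x := RInt phi 0 x.

Lemma Pf_derive (x : R) : is_derive Pf x (phi x).
Proof.
unfold Pf. apply (is_derive_RInt (V:=R_NormedModule) phi (RInt phi 0) 0 x).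
- apply filter_forall. intro b. apply (RInt_correct (V:=R_CompleteNormedModule)), cont_ex, cont_phi.
- apply cont_phi.
Qed.

Lemma ex_derive_Pf (x : R) : ex_derive Pf x.
Proof. exists (phi x). apply Pf_derive. Qed.

Lemma cont_Pf : cont Pf.
Proof. intro x. apply (ex_derive_continuous (K:=R_AbsRing) (V:=R_NormedModule)). apply ex_derive_Pf. Qed.

Lemma Q_eq x : Q x = 1 / 2 - Pf x.
Proof.
unfold Q. apply (is_RInt_gen_unique (V:=R_CompleteNormedModule)).
apply gen_right. apply cont_phi.
apply (is_lim_ext (fun b => RInt phi 0 b + (-1) * Pf x)).
{ intros b. unfold Pf. rewrite <- (RInt_Chasles (V:=R_CompleteNormedModule) phi 0 x b) by (apply cont_ex, cont_phi).
  unfold plus; simpl. req; ring. }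
replace (Finite (1 / 2 - Pf x)) with (Rbar_plus (1 / 2) (Rbar_mult (-1) (Pf x))) by (simpl; f_equal; ring).
apply (is_lim_plus _ _ p_infty (1 / 2) (Rbar_mult (-1) (Pf x))).
- apply HL_phi.
- apply (is_lim_scal_l _ (-1) p_infty (Pf x)). apply is_lim_const.
- apply (Rbar_plus_correct (1 / 2) (Rbar_mult (-1) (Pf x))); exact I.
Qed.

Lemma phi_even x : phi (- x) = phi x.
Proof. unfold phi. replace ((- x) ^ 2) with (x ^ 2) by ring. reflexivity. Qed.

Lemma phi_pos x : 0 < phi x.
Proof. rewrite phi_e2. apply Rmult_lt_0_compat. apply phi0_pos. apply e2_pos. Qed.

Lemma phi_le x : phi x <= phi0.
Proof. rewrite phi_e2. generalize phi0_pos (e2_le1 x); intros. nra. Qed.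

Lemma Pf_odd x : Pf (- x) = - Pf x.
Proof.
unfold Pf. rewrite <- (RInt_even phi x cont_phi phi_even).
rewrite <- (opp_RInt_swap (V:=R_CompleteNormedModule)) by (apply cont_ex, cont_phi). reflexivity.
Qed.

Lemma Pf_nonneg x : 0 <= x -> 0 <= Pf x.
Proof. intros. unfold Pf. apply RInt_ge_0; [lra|apply cont_ex, cont_phi|]. intros; apply Rlt_le, phi_pos. Qed.

Lemma Pf_le x : 0 <= x -> Pf x <= phi0 * x.
Proof.
intros Hx. unfold Pf.
replace (phi0 * x) with (RInt (fun _ => phi0) 0 x).
2:{ rewrite RInt_const. unfold scal; simpl; unfold mult; simpl. req; ring. }
apply RInt_le; [lra|apply cont_ex, cont_phi|apply cont_ex; intro; apply continuous_const|].
intros; apply phi_le.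
Qed.

Lemma Pf_abs x : Rabs (Pf x) = Pf (Rabs x).
Proof.
unfold Rabs at 2. destruct (Rcase_abs x).
- rewrite Pf_odd. rewrite Rabs_left1. ring. rewrite <- (Ropp_involutive x), Pf_odd.
  generalize (Pf_nonneg (- x)); intros; lra.
- apply Rabs_right. apply Rle_ge, Pf_nonneg; lra.
Qed.

Lemma Pf_abs_le x : Rabs (Pf x) <= phi0 * Rabs x.
Proof. rewrite Pf_abs. apply Pf_le, Rabs_pos. Qed.

Lemma phi_mono u t : 0 <= u <= t -> phi t <= phi u.
Proof.
intros H. rewrite !phi_e2. apply Rmult_le_compat_l. apply Rlt_le, phi0_pos.
unfold e2. apply exp_le. nra.
Qed.

Lemma Pf_tail u : 0 <= u -> Pf u + phi (u + 1) <= 1 / 2.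
Proof.
intros Hu.
assert (Hk : is_lim (fun _ => Pf u + phi (u + 1)) p_infty (Pf u + phi (u + 1))) by apply is_lim_const.
assert (H : Rbar_le (Pf u + phi (u + 1)) (1 / 2)).
{ refine (is_lim_le_loc _ _ p_infty _ _ _ Hk HL_phi).
  exists (u + 1). intros b Hb.
  rewrite <- (RInt_Chasles (V:=R_CompleteNormedModule) phi 0 u b) by (apply cont_ex, cont_phi).
  rewrite <- (RInt_Chasles (V:=R_CompleteNormedModule) phi u (u + 1) b) by (apply cont_ex, cont_phi).
  unfold plus; simpl. fold (Pf u).
  assert (H1 : 0 <= RInt phi (u + 1) b).
  { apply RInt_ge_0; [lra|apply cont_ex, cont_phi|]. intros; apply Rlt_le, phi_pos. }
  assert (H2 : phi (u + 1) <= RInt phi u (u + 1)).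
  { replace (phi (u + 1)) with (RInt (fun _ => phi (u + 1)) u (u + 1)) at 1.
    2:{ rewrite RInt_const. unfold scal; simpl; unfold mult; simpl. req; ring. }
    apply RInt_le; [lra|apply cont_ex; intro; apply continuous_const|apply cont_ex, cont_phi|].
    intros; apply phi_mono; lra. }
  lra. }
exact H.
Qed.

Definition Dd x := 1 / 4 - Pf x * Pf x.

Lemma Dd_lower x : phi (Rabs x + 1) / 2 <= Dd x.
Proof.
unfold Dd.
assert (H := Pf_tail (Rabs x) (Rabs_pos x)).
rewrite <- Pf_abs in H.
assert (H0 := Rabs_pos (Pf x)).
assert (Hs : Pf x * Pf x = Rabs (Pf x) * Rabs (Pf x)).
{ rewrite <- Rabs_mult. rewrite Rabs_right; auto. apply Rle_ge. apply Rle_0_sqr. }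
rewrite Hs. generalize (phi_pos (Rabs x + 1)). intros. nra.
Qed.

Lemma Dd_pos x : 0 < Dd x.
Proof. eapply Rlt_le_trans; [|apply Dd_lower]. generalize (phi_pos (Rabs x + 1)); lra. Qed.

Lemma xi_eq s : xi s = phi s ^ 2 / Dd s.
Proof. unfold xi. rewrite Q_eq. unfold Dd. f_equal. field. Qed.

Lemma xi_even s : xi (- s) = xi s.
Proof. rewrite !xi_eq. unfold Dd. rewrite phi_even, Pf_odd. f_equal. ring. Qed.

Lemma xi_pos s : 0 < xi s.
Proof. rewrite xi_eq. apply Rdiv_lt_0_compat. generalize (phi_pos s); intros; nra. apply Dd_pos. Qed.

Lemma cont_xi : cont xi.
Proof.
intro x. apply (continuous_ext (fun s => phi s ^ 2 / Dd s)). { intros; symmetry; apply xi_eq. }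
apply (ex_derive_continuous (K:=R_AbsRing) (V:=R_NormedModule)).
unfold Dd, phi. auto_derive. repeat split; try apply ex_derive_Pf.
generalize (Dd_pos x). unfold Dd. lra.
Qed.


Definition E (s : R) := exp (- s ^ 2 / 2 + Rabs s + 1 / 2).

Lemma E_pos s : 0 < E s.
Proof. apply exp_pos. Qed.

Lemma abs_sq s : Rabs s ^ 2 = s ^ 2.
Proof. apply pow2_abs. Qed.

Lemma phi_ratio s : phi s ^ 2 / phi (Rabs s + 1) = phi0 * E s.
Proof.
rewrite !phi_e2. unfold e2, E.
replace (- s ^ 2 / 2 + Rabs s + 1 / 2) with ((- s ^ 2 / 2) + (- s ^ 2 / 2) + - (- (Rabs s + 1) ^ 2 / 2)).
2:{ replace ((Rabs s + 1) ^ 2) with (Rabs s ^ 2 + 2 * Rabs s + 1) by ring. rewrite abs_sq. field. }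
rewrite !exp_plus, exp_Ropp.
generalize phi0_pos (exp_pos (- (Rabs s + 1) ^ 2 / 2)). intros. field. lra.
Qed.

Lemma xi_le_E s : xi s <= 2 * phi0 * E s.
Proof.
rewrite xi_eq. replace (2 * phi0 * E s) with (2 * (phi0 * E s)) by ring. rewrite <- phi_ratio.
assert (H := Dd_lower s). assert (H1 := phi_pos (Rabs s + 1)). assert (H2 := phi_pos s).
unfold Rdiv. replace (2 * (phi s ^ 2 * / phi (Rabs s + 1))) with (phi s ^ 2 * / (phi (Rabs s + 1) / 2)) by (field; lra).
apply Rmult_le_compat_l. nra.
apply Rinv_le_contravar; lra.
Qed.

Lemma E_le s : E s <= exp 1.
Proof. unfold E. apply exp_le. rewrite <- (abs_sq s). generalize (Rabs s). intro a. assert (0 <= (a - 1) * (a - 1)) by (apply Rle_0_sqr). simpl. lra. Qed.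

Definition Xmax := 2 * phi0 * exp 1.

Lemma xi_le s : xi s <= Xmax.
Proof. eapply Rle_trans. apply xi_le_E. unfold Xmax. generalize phi0_pos (E_le s); intros. nra. Qed.

Lemma e2_le_E s : e2 s <= E s.
Proof. unfold e2, E. apply exp_le. generalize (Rabs_pos s). lra. Qed.

Lemma phi_le_E s : phi s <= phi0 * E s.
Proof. rewrite phi_e2. generalize phi0_pos (e2_le_E s). nra. Qed.

Definition W (s : R) := (1 + s ^ 4) * E s.
Definition KW := 65 * exp (9 / 2).

Lemma W_dom s : 0 <= s -> W s <= KW * exp (- s).
Proof.
intros Hs. unfold W, KW, E. rewrite Rabs_right by lra.
set (y := s ^ 2 / 4).
assert (Hy0 : 0 <= y) by (unfold y; nra).
assert (Hy : s ^ 4 <= 64 * exp y).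
{ assert (H1 := exp_ineq1_le (y / 2)).
  assert (H2 : exp y = exp (y / 2) * exp (y / 2)) by (rewrite <- exp_plus; f_equal; field).
  replace (s ^ 4) with (16 * (y * y)) by (unfold y; field). nra. }
replace (- s ^ 2 / 2 + s + 1 / 2) with (- s + 9 / 2 + - y + - ((s / 2 - 2) ^ 2)) by (unfold y; field).
rewrite !exp_plus.
assert (H3 : exp (- ((s / 2 - 2) ^ 2)) <= 1) by (rewrite <- exp_0; apply exp_le; generalize (pow2_ge_0 (s / 2 - 2)); lra).
assert (H4 : exp (- y) * exp y = 1) by (rewrite <- exp_plus; replace (- y + y) with 0 by ring; apply exp_0).
assert (H5 : exp (- y) <= 1) by (rewrite <- exp_0; apply exp_le; lra).
generalize (exp_pos (- s)) (exp_pos (9/2)) (exp_pos (- y)) (exp_pos (- ((s / 2 - 2) ^ 2))) (exp_pos y). intros.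
set (a := exp (- s)) in *. set (b := exp (9 / 2)) in *. set (c := exp (- y)) in *.
set (d := exp (- ((s / 2 - 2) ^ 2))) in *. set (e := exp y) in *.
assert (Hs4 : 0 <= s ^ 4) by nra.
clearbody a b c d e y.
assert (HA : (1 + s ^ 4) * c <= 65) by nra.
assert (HB : (1 + s ^ 4) * (a * b * c * d) <= (1 + s ^ 4) * c * (a * b)).
{ assert (0 <= (1 + s ^ 4) * c * (a * b)) by (apply Rmult_le_pos; [nra|nra]). nra. }
assert (0 <= a * b) by (apply Rmult_le_pos; lra). assert (HC : (1 + s ^ 4) * c * (a * b) <= 65 * (a * b)) by (apply Rmult_le_compat_r; auto). lra.
Qed.

Lemma W_pos s : 0 < W s.
Proof. unfold W. generalize (E_pos s); intros. assert (0 <= s ^ 4) by nra. nra. Qed.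

Lemma HL_domW f C : cont f -> 0 <= C -> (forall s, 0 <= s -> Rabs (f s) <= C * W s) ->
  exists L, HL f L.
Proof.
intros Hf HC Hb. apply (HL_domC f (C * KW)); auto.
intros x Hx. eapply Rle_trans. apply Hb; auto. rewrite Rmult_assoc. apply Rmult_le_compat_l; auto.
apply W_dom; auto.
Qed.


Definition C1 := (phi0 ^ 2 + 4 * phi0 ^ 4) * 2 / phi 2 + Xmax + 2 / PI.

Lemma twoPI : 2 / PI = 4 * (phi0 * phi0).
Proof. rewrite phi0_sq. generalize PI_RGT_0; intros. field. lra. Qed.

Lemma Xmax_pos : 0 < Xmax.
Proof. unfold Xmax. generalize phi0_pos (exp_pos 1). intros. nra. Qed.

Lemma xi_diff u : Rabs (xi u - 2 / PI) <= C1 * u ^ 2.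
Proof.
assert (HPI := PI_RGT_0).
assert (Hp0 := phi0_pos).
assert (Hph2 := phi_pos 2).
assert (Hu2 : 0 <= u ^ 2) by apply pow2_ge_0.
assert (HA : 0 <= (phi0 ^ 2 + 4 * phi0 ^ 4) * 2 / phi 2).
{ apply Rmult_le_pos; [|left; apply Rinv_0_lt_compat; auto]. 
  assert (0 <= phi0 ^ 2) by apply pow2_ge_0. assert (0 <= phi0 ^ 4) by (apply pow_le; lra). lra. }
assert (HB : 0 < Xmax + 2 / PI) by (generalize Xmax_pos; assert (0 < 2 / PI) by (apply Rdiv_lt_0_compat; lra); lra).
destruct (Rle_lt_dec (Rabs u) 1) as [Hs|Hs].
- rewrite xi_eq, twoPI.
  assert (HD := Dd_lower u). assert (HDp := Dd_pos u).
  assert (HD2 : phi 2 / 2 <= Dd u).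
  { eapply Rle_trans; [|exact HD]. assert (phi 2 <= phi (Rabs u + 1)).
    { apply phi_mono. generalize (Rabs_pos u); lra. } lra. }
  replace (phi u ^ 2 / Dd u - 4 * (phi0 * phi0)) with ((phi u ^ 2 - phi0 ^ 2 + 4 * phi0 ^ 2 * (Pf u * Pf u)) / Dd u).
  2:{ unfold Dd in *. field. lra. }
  assert (Hn1 : Rabs (phi u ^ 2 - phi0 ^ 2) <= phi0 ^ 2 * u ^ 2).
  { rewrite phi_e2.
    assert (He : e2 u * e2 u = exp (- u ^ 2)) by (unfold e2; rewrite <- exp_plus; f_equal; field).
    assert (H1 := exp_ineq1_le (- u ^ 2)).
    assert (H2 := e2_le1 u). assert (H3 := e2_pos u).
    replace ((phi0 * e2 u) ^ 2 - phi0 ^ 2) with (- (phi0 ^ 2 * (1 - e2 u * e2 u))) by ring.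
    rewrite Rabs_Ropp. rewrite Rabs_right.
    2:{ apply Rle_ge. apply Rmult_le_pos. apply pow2_ge_0. nra. }
    apply Rmult_le_compat_l. apply pow2_ge_0. lra. }
  assert (Hn2 : Pf u * Pf u <= phi0 ^ 2 * u ^ 2).
  { assert (H := Pf_abs_le u). assert (H0 := Rabs_pos (Pf u)).
    replace (Pf u * Pf u) with (Rabs (Pf u) * Rabs (Pf u)) by (rewrite <- Rabs_mult; apply Rabs_right; apply Rle_ge, Rle_0_sqr).
    replace (phi0 ^ 2 * u ^ 2) with ((phi0 * Rabs u) * (phi0 * Rabs u)) by (rewrite <- (abs_sq u); ring).
    apply Rmult_le_compat; auto. }
  assert (Hn : Rabs (phi u ^ 2 - phi0 ^ 2 + 4 * phi0 ^ 2 * (Pf u * Pf u)) <= (phi0 ^ 2 + 4 * phi0 ^ 4) * u ^ 2).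
  { eapply Rle_trans. apply Rabs_triang. rewrite (Rabs_right (4 * phi0 ^ 2 * (Pf u * Pf u))).
    2:{ apply Rle_ge. apply Rmult_le_pos. assert (0 <= phi0 ^ 2) by apply pow2_ge_0. lra. apply Rle_0_sqr. }
    assert (0 <= phi0 ^ 2) by apply pow2_ge_0.
    replace ((phi0 ^ 2 + 4 * phi0 ^ 4) * u ^ 2) with (phi0 ^ 2 * u ^ 2 + 4 * phi0 ^ 2 * (phi0 ^ 2 * u ^ 2)) by ring.
    apply Rplus_le_compat; auto. apply Rmult_le_compat_l; [lra|auto]. }
  unfold Rdiv. rewrite Rabs_mult. rewrite (Rabs_right (/ Dd u)) by (apply Rle_ge; left; apply Rinv_0_lt_compat; auto).
  assert (Hi : / Dd u <= 2 / phi 2).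
  { replace (2 / phi 2) with (/ (phi 2 / 2)) by (field; lra). apply Rinv_le_contravar; auto. lra. }
  unfold C1.
  apply Rle_trans with ((phi0 ^ 2 + 4 * phi0 ^ 4) * u ^ 2 * (2 / phi 2)).
  { apply Rmult_le_compat; auto. apply Rabs_pos. left; apply Rinv_0_lt_compat; auto. }
  assert (0 <= (Xmax + 2 / PI) * u ^ 2) by (apply Rmult_le_pos; lra).
  unfold Rdiv in *. 
  replace ((phi0 ^ 2 + 4 * phi0 ^ 4) * 2 * / phi 2 + Xmax + 2 * / PI) with
     ((phi0 ^ 2 + 4 * phi0 ^ 4) * 2 * / phi 2 + (Xmax + 2 * / PI)) by ring.
  rewrite Rmult_plus_distr_r. 
  replace ((phi0 ^ 2 + 4 * phi0 ^ 4) * u ^ 2 * (2 * / phi 2)) with ((phi0 ^ 2 + 4 * phi0 ^ 4) * 2 * / phi 2 * u ^ 2) by ring.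
  lra.
- assert (Hu1 : 1 <= u ^ 2).
  { rewrite <- (abs_sq u). simpl. nra. }
  assert (H1 := xi_le u). assert (H2 := xi_pos u).
  assert (0 < 2 / PI) by (apply Rdiv_lt_0_compat; lra).
  apply Rle_trans with (Xmax + 2 / PI).
  { unfold Rabs. destruct Rcase_abs; lra. }
  unfold C1.
  apply Rle_trans with ((Xmax + 2 / PI) * u ^ 2). nra.
  assert (0 <= (phi0 ^ 2 + 4 * phi0 ^ 4) * 2 / phi 2 * u ^ 2) by (apply Rmult_le_pos; auto).
  replace (((phi0 ^ 2 + 4 * phi0 ^ 4) * 2 / phi 2 + Xmax + 2 / PI) * u ^ 2) with
    ((phi0 ^ 2 + 4 * phi0 ^ 4) * 2 / phi 2 * u ^ 2 + (Xmax + 2 / PI) * u ^ 2) by ring.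
  lra.
Qed.


Lemma ex_derive_xi (x : R) : ex_derive xi x.
Proof.
apply (ex_derive_ext (fun s => phi s ^ 2 / Dd s)). { intros; symmetry; apply xi_eq. }
unfold Dd, phi. auto_derive. repeat split; try apply ex_derive_Pf.
generalize (Dd_pos x). unfold Dd. lra.
Qed.

Ltac cont_tac := intro; apply (ex_derive_continuous (K:=R_AbsRing) (V:=R_NormedModule));
  auto_derive; repeat split; try apply ex_derive_xi; auto.

Lemma poly_ok k s : (k = 0 \/ k = 2 \/ k = 4)%nat -> 0 <= s -> 0 <= s ^ k <= 1 + s ^ 4.
Proof.
intros Hk Hs. assert (0 <= s ^ 2) by apply pow2_ge_0. assert (0 <= s ^ 4) by (apply pow_le; auto).
destruct Hk as [Hk|[Hk|Hk]]; subst k; simpl in *; split; nra.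
Qed.

Lemma HL_s2phi : HL (fun s => s ^ 2 * phi s) (1 / 2).
Proof.
unfold HL.
apply (is_lim_ext (fun b => Pf b - b * phi b)).
{ intros b. symmetry. apply (is_RInt_unique (V:=R_CompleteNormedModule)).
  replace (Pf b - b * phi b) with (minus (Pf b - b * phi b) (Pf 0 - 0 * phi 0)).
  2:{ unfold Pf. rewrite RInt_point. unfold minus, plus, opp, zero; simpl. ring. }
  apply (is_RInt_derive (fun s => Pf s - s * phi s)).
  - intros x _. unfold phi. auto_derive. apply ex_derive_Pf.
    replace (Derive (fun x0 => Pf x0) x) with (phi x) by (symmetry; apply is_derive_unique, Pf_derive).
    unfold phi.
    replace (exp (- (x * (x * 1)) * / 2)) with (exp (- x ^ 2 / 2)) by (f_equal; field).
    assert (Hs : sqrt (2 * PI) <> 0) by (rewrite sqrt2PI; generalize sqrtPI2_pos; lra). field; auto.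
  - intros y _. unfold phi. apply (ex_derive_continuous (K:=R_AbsRing) (V:=R_NormedModule)). auto_derive; auto. }
assert (Hb : is_lim (fun b => b * phi b) p_infty 0).
{ apply (is_lim_le_le_loc (fun _ => 0) (fun b => phi0 * KW * exp (- b))).
  - exists 0. intros b Hb. split. apply Rmult_le_pos; [lra|apply Rlt_le, phi_pos].
    eapply Rle_trans with (b * (phi0 * E b)).
    { apply Rmult_le_compat_l; [lra|apply phi_le_E]. }
    rewrite Rmult_assoc. 
    apply Rle_trans with (phi0 * W b).
    { replace (b * (phi0 * E b)) with (phi0 * (b * E b)) by ring. apply Rmult_le_compat_l. apply Rlt_le, phi0_pos.
      unfold W. apply Rmult_le_compat_r. apply Rlt_le, E_pos.
      assert (0 <= b ^ 2) by apply pow2_ge_0. assert (b <= 1 + b ^ 4) by (assert (0 <= (b - 1) * (b - 1)) by apply Rle_0_sqr; assert (0 <= (b * b - 1) * (b * b - 1)) by apply Rle_0_sqr; assert (0 <= b ^ 4) by (apply pow_le; lra); lra). lra. }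
    apply Rmult_le_compat_l. apply Rlt_le, phi0_pos. apply W_dom; lra.
  - apply is_lim_const.
  - replace (Finite 0) with (Rbar_mult (phi0 * KW) 0) by (simpl; f_equal; ring).
    apply (is_lim_scal_l _ (phi0 * KW) p_infty 0). apply expm_lim. }
replace (Finite (1 / 2)) with (Rbar_plus (1 / 2) (Rbar_mult (-1) 0)) by (simpl; f_equal; ring).
apply (is_lim_ext (fun b => Pf b + (-1) * (b * phi b))). { intros; ring. }
apply (is_lim_plus _ _ p_infty (1 / 2) (Rbar_mult (-1) 0)).
- apply HL_phi.
- apply (is_lim_scal_l _ (-1) p_infty 0). exact Hb.
- apply (Rbar_plus_correct (1 / 2) (Rbar_mult (-1) 0)); exact I.
Qed.


Lemma abs_nn_le a b : 0 <= a <= b -> Rabs a <= b.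
Proof. intros [H1 H2]. rewrite Rabs_right; lra. Qed.

Lemma cont_s4phi : cont (fun s => s ^ 4 * phi s).
Proof. unfold phi. cont_tac. Qed.
Lemma cont_s2phi : cont (fun s => s ^ 2 * phi s).
Proof. unfold phi. cont_tac. Qed.

Lemma HL_s4phi : exists L, HL (fun s => s ^ 4 * phi s) L.
Proof.
apply (HL_domW _ phi0 cont_s4phi). apply Rlt_le, phi0_pos.
intros s Hs. assert (Hk := poly_ok 4 s ltac:(lia) Hs). assert (H1 := phi_pos s). assert (H2 := phi_le_E s).
apply abs_nn_le. split. apply Rmult_le_pos; lra.
unfold W. apply Rle_trans with ((1 + s ^ 4) * (phi0 * E s)).
apply Rmult_le_compat; lra.
right; ring.
Qed.

Lemma cont_Xk k : cont (fun u => xi u * u ^ k).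
Proof. cont_tac. Qed.

Lemma HL_Xk k : (k = 0 \/ k = 2 \/ k = 4)%nat -> exists L, HL (fun u => xi u * u ^ k) L.
Proof.
intros Hk0.
apply (HL_domW _ (2 * phi0) (cont_Xk k)). generalize phi0_pos; lra.
intros s Hs. assert (Hk := poly_ok k s Hk0 Hs). assert (H1 := xi_pos s). assert (H2 := xi_le_E s).
apply abs_nn_le. split. apply Rmult_le_pos; lra.
unfold W. apply Rle_trans with ((2 * phi0 * E s) * (1 + s ^ 4)).
apply Rmult_le_compat; lra.
right; ring.
Qed.

Lemma cont_Z k r : cont (fun s => s ^ k * xi (r * s) * phi s).
Proof. unfold phi. cont_tac. Qed.

Lemma HL_Z k r : (k = 0 \/ k = 2 \/ k = 4)%nat -> exists L, HL (fun s => s ^ k * xi (r * s) * phi s) L.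
Proof.
intros Hk0.
apply (HL_domW _ (Xmax * phi0) (cont_Z k r)). generalize phi0_pos Xmax_pos; intros; nra.
intros s Hs. assert (Hk := poly_ok k s Hk0 Hs). assert (H1 := xi_pos (r * s)). assert (H2 := xi_le (r * s)).
assert (H3 := phi_pos s). assert (H4 := phi_le_E s). assert (H5 := E_pos s).
apply abs_nn_le. split. apply Rmult_le_pos; [apply Rmult_le_pos|]; lra.
unfold W. apply Rle_trans with ((1 + s ^ 4) * Xmax * (phi0 * E s)).
apply Rmult_le_compat; try lra. apply Rmult_le_pos; lra. apply Rmult_le_compat; lra.
right; ring.
Qed.

Lemma cont_F k r : r <> 0 -> cont (fun u => xi u * u ^ k * phi (u / r)).
Proof. intros Hr. unfold phi. cont_tac. Qed.

Lemma HL_F k r : r <> 0 -> (k = 0 \/ k = 2 \/ k = 4)%nat ->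
  exists L, HL (fun u => xi u * u ^ k * phi (u / r)) L.
Proof.
intros Hr Hk0.
apply (HL_domW _ (2 * phi0 * phi0) (cont_F k r Hr)). generalize phi0_pos; intros; nra.
intros s Hs. assert (Hk := poly_ok k s Hk0 Hs). assert (H1 := xi_pos s). assert (H2 := xi_le_E s).
assert (H3 := phi_pos (s / r)). assert (H4 := phi_le (s / r)). assert (H5 := E_pos s).
apply abs_nn_le. split. apply Rmult_le_pos; [apply Rmult_le_pos|]; lra.
unfold W. apply Rle_trans with ((2 * phi0 * E s) * (1 + s ^ 4) * phi0).
apply Rmult_le_compat; try lra. apply Rmult_le_pos; lra. apply Rmult_le_compat; lra.
right; ring.
Qed.


Lemma keven k x : (k = 0 \/ k = 2)%nat -> (- x) ^ k = x ^ k.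
Proof. intros [H|H]; subst k; simpl; ring. Qed.

Lemma zeta_val k r L : (k = 0 \/ k = 2)%nat -> HL (fun s => s ^ k * xi (r * s) * phi s) L -> zeta k r = 2 * L.
Proof.
intros Hk H. unfold zeta. apply RInt_gen_full; auto. apply cont_Z.
intros x. rewrite keven by auto. replace (r * - x) with (- (r * x)) by ring. rewrite xi_even, phi_even. reflexivity.
Qed.

Lemma A0_val L : HL xi L -> A0 = phi0 * (2 * L).
Proof. intros H. unfold A0. rewrite (RInt_gen_full xi L cont_xi xi_even H). reflexivity. Qed.

Lemma A2_val L : HL (fun u => xi u * u ^ 2) L -> A2 = phi0 * (2 * L).
Proof.
intros H. unfold A2. rewrite (RInt_gen_full _ L (cont_Xk 2)); auto.
intros x. rewrite xi_even. f_equal. ring.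
Qed.

Lemma C1_nn : 0 <= C1.
Proof. assert (H := xi_diff 1). assert (H0 := Rabs_pos (xi 1 - 2 / PI)). simpl in H. lra. Qed.

Lemma HL_nn f L : cont f -> (forall x, 0 <= x -> 0 <= f x) -> HL f L -> 0 <= L.
Proof. intros Hf Hp H. apply (HL_le_const f L 0 0); auto. lra. apply (RInt_point (V:=R_CompleteNormedModule)). Qed.

Lemma cont_scal k f : cont f -> cont (fun x => k * f x).
Proof. intros H x. apply (continuous_scal_r (K:=R_AbsRing) (V:=R_NormedModule) k f x (H x)). Qed.

Lemma cont_plus f g : cont f -> cont g -> cont (fun x => f x + g x).
Proof. intros H1 H2 x. apply (continuous_plus (V:=R_NormedModule) f g x (H1 x) (H2 x)). Qed.

Lemma part1_k k r Mk : (k = 0 \/ k = 2)%nat -> HL (fun s => s ^ k * phi s) (1 / 2) ->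
  HL (fun s => s ^ (k + 2) * phi s) Mk -> Rabs (zeta k r - 2 / PI) <= 2 * C1 * Mk * r ^ 2.
Proof.
intros Hk Hp Hm.
assert (Hkk : (k = 0 \/ k = 2 \/ k = 4)%nat) by lia.
destruct (HL_Z k r Hkk) as [L HL0]. rewrite (zeta_val k r L Hk HL0).
assert (Hck : cont (fun s => s ^ k * phi s)) by (unfold phi; cont_tac).
assert (Hck2 : cont (fun s => s ^ (k + 2) * phi s)) by (unfold phi; cont_tac).
assert (Hd := HL_plus _ _ _ _ (cont_Z k r) (cont_scal (- (2 / PI)) _ Hck)
   HL0 (HL_scal (- (2 / PI)) _ _ Hck Hp)).
assert (Hb := HL_scal (C1 * r ^ 2) _ _ Hck2 Hm).
assert (Hle : Rabs (L + - (2 / PI) * (1 / 2)) <= C1 * r ^ 2 * Mk).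
{ apply (HL_abs_le _ _ _ _ (cont_plus _ _ (cont_Z k r) (cont_scal (- (2 / PI)) _ Hck))
   (cont_scal (C1 * r ^ 2) _ Hck2)); [|exact Hd|exact Hb].
  intros x Hx. cbv beta.
  replace (x ^ k * xi (r * x) * phi x + - (2 / PI) * (x ^ k * phi x)) with ((x ^ k * phi x) * (xi (r * x) - 2 / PI)) by ring.
  rewrite Rabs_mult. rewrite (Rabs_right (x ^ k * phi x)).
  2:{ apply Rle_ge, Rmult_le_pos. apply pow_le; auto. apply Rlt_le, phi_pos. }
  eapply Rle_trans. apply Rmult_le_compat_l. apply Rmult_le_pos. apply pow_le; auto. apply Rlt_le, phi_pos.
  apply xi_diff. rewrite pow_add. right. ring. }
replace (2 * L - 2 / PI) with (2 * (L + - (2 / PI) * (1 / 2))) by (field; generalize PI_RGT_0; lra).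
rewrite Rabs_mult, (Rabs_right 2) by lra.
replace (2 * C1 * Mk * r ^ 2) with (2 * (C1 * r ^ 2 * Mk)) by ring. lra.
Qed.

Lemma cmp_bound k r u : r <> 0 -> 0 <= u ->
  Rabs (xi u * u ^ k * phi (u / r) + - phi0 * (xi u * u ^ k)) <= phi0 / (2 * r ^ 2) * (xi u * u ^ (k + 2)).
Proof.
intros Hr Hu.
assert (H1 := xi_pos u). assert (H2 : 0 <= u ^ k) by (apply pow_le; auto).
assert (H3 := phi0_pos). assert (H4 := e2_le1 (u / r)).
assert (H5 : 1 - (u / r) ^ 2 / 2 <= e2 (u / r)).
{ unfold e2. generalize (exp_ineq1_le (- (u / r) ^ 2 / 2)). intros. lra. }
rewrite phi_e2.
replace (xi u * u ^ k * (phi0 * e2 (u / r)) + - phi0 * (xi u * u ^ k)) with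
  (- ((xi u * u ^ k * phi0) * (1 - e2 (u / r)))) by ring.
rewrite Rabs_Ropp. rewrite Rabs_right.
2:{ apply Rle_ge, Rmult_le_pos. apply Rmult_le_pos; [apply Rmult_le_pos|]; lra. lra. }
apply Rle_trans with ((xi u * u ^ k * phi0) * ((u / r) ^ 2 / 2)).
{ apply Rmult_le_compat_l. apply Rmult_le_pos; [apply Rmult_le_pos|]; lra. lra. }
rewrite pow_add. right. field. auto.
Qed.

Lemma cont_Fs k r : r <> 0 -> cont (fun s => / r ^ k * (xi (r * s) * (r * s) ^ k * phi (r * s / r))).
Proof. intros Hr. unfold phi. cont_tac. Qed.

Lemma part2_k k r Lk Lk2 : (k = 0 \/ k = 2)%nat -> 0 < r -> HL (fun u => xi u * u ^ k) Lk ->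
  HL (fun u => xi u * u ^ (k + 2)) Lk2 ->
  Rabs (r ^ (k + 1) * zeta k r - 2 * phi0 * Lk) <= phi0 * Lk2 / r ^ 2.
Proof.
intros Hk Hr H1 H2.
assert (Hkk : (k = 0 \/ k = 2 \/ k = 4)%nat) by lia.
assert (Hr0 : r <> 0) by lra.
destruct (HL_F k r Hr0 Hkk) as [LF HF].
destruct (HL_Z k r Hkk) as [Lz HZ].
assert (HS := HL_scale _ _ r (cont_F k r Hr0) Hr HF).
assert (HS2 := HL_scal (/ r ^ k) _ _ (fun x => continuous_comp (fun s => r * s) _ x
   (ex_derive_continuous (K:=R_AbsRing) (V:=R_NormedModule) (fun s => r * s) x ltac:(auto_derive; auto))
   (cont_F k r Hr0 (r * x))) HS).
assert (HZ' : HL (fun s => s ^ k * xi (r * s) * phi s) (/ r ^ k * (LF / r))).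
{ refine (HL_ext _ _ _ _ HS2). intros x _. cbv beta.
  replace (r * x / r) with x by (field; auto). rewrite Rpow_mult_distr.
  field. apply pow_nonzero; auto. }
assert (HLz := HL_unique _ _ _ HZ HZ').
rewrite (zeta_val k r Lz Hk HZ), HLz.
replace (r ^ (k + 1) * (2 * (/ r ^ k * (LF / r))) - 2 * phi0 * Lk) with (2 * (LF + - phi0 * Lk)).
2:{ rewrite pow_add. simpl. field. split; auto. apply pow_nonzero; auto. }
assert (Hd := HL_plus _ _ _ _ (cont_F k r Hr0) (cont_scal (- phi0) _ (cont_Xk k)) HF (HL_scal (- phi0) _ _ (cont_Xk k) H1)).
assert (Hb := HL_scal (phi0 / (2 * r ^ 2)) _ _ (cont_Xk (k + 2)) H2).
assert (Hle : Rabs (LF + - phi0 * Lk) <= phi0 / (2 * r ^ 2) * Lk2).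
{ apply (HL_abs_le _ _ _ _ (cont_plus _ _ (cont_F k r Hr0) (cont_scal (- phi0) _ (cont_Xk k)))
   (cont_scal (phi0 / (2 * r ^ 2)) _ (cont_Xk (k + 2)))); [|exact Hd|exact Hb].
  intros x Hx. cbv beta. apply cmp_bound; auto. }
rewrite Rabs_mult, (Rabs_right 2) by lra.
replace (phi0 * Lk2 / r ^ 2) with (2 * (phi0 / (2 * r ^ 2) * Lk2)) by (field; try apply pow_nonzero; auto).
lra.
Qed.


Lemma HL_pos_k k L : HL (fun u => xi u * u ^ k) L -> 0 < L.
Proof.
intros H.
apply Rlt_le_trans with (RInt (fun u => xi u * u ^ k) 0 1).
- apply RInt_gt_0. lra.
  intros x Hx. apply Rmult_lt_0_compat. apply xi_pos. apply pow_lt; lra.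
  intros; apply cont_Xk.
- apply (HL_le_const _ L _ 1 (cont_Xk k)); auto. lra.
  intros x Hx. apply Rmult_le_pos. apply Rlt_le, xi_pos. apply pow_le; auto.
Qed.

Theorem lemma6 :
  (exists C delta : R, 0 < delta /\
     forall r : R, Rabs r < delta ->
       Rabs (zeta 0 r - 2 / PI) <= C * r ^ 2 /\
       Rabs (zeta 2 r - 2 / PI) <= C * r ^ 2) /\
  (exists (C M : R) (g0 g2 : R -> R),
     forall r : R, M < r ->
       zeta 0 r = A0 / r * (1 + g0 r) /\ Rabs (g0 r) <= C / r ^ 2 /\
       zeta 2 r = A2 / r ^ 3 * (1 + g2 r) /\ Rabs (g2 r) <= C / r ^ 2).
Proof.
split.
- destruct HL_s4phi as [M4 HM4].
  assert (HM4n : 0 <= M4).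
  { apply (HL_nn _ _ cont_s4phi); auto. intros; apply Rmult_le_pos. apply pow_le; auto. apply Rlt_le, phi_pos. }
  assert (HC1 := C1_nn).
  exists (2 * C1 * (1 / 2) + 2 * C1 * M4), 1. split. lra.
  intros r _.
  assert (Hr2 : 0 <= r ^ 2) by apply pow2_ge_0.
  assert (Hp0 : HL (fun s => s ^ 0 * phi s) (1 / 2)).
  { apply (HL_ext phi). intros; simpl; ring. apply HL_phi. }
  assert (A := part1_k 0 r (1 / 2) ltac:(lia) Hp0 HL_s2phi).
  assert (B := part1_k 2 r M4 ltac:(lia) HL_s2phi HM4).
  assert (0 <= 2 * C1 * (1 / 2) * r ^ 2) by (apply Rmult_le_pos; lra).
  assert (0 <= 2 * C1 * M4 * r ^ 2) by (apply Rmult_le_pos; [apply Rmult_le_pos|]; lra).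
  split.
  + eapply Rle_trans. exact A. rewrite Rmult_plus_distr_r. lra.
  + eapply Rle_trans. exact B. rewrite Rmult_plus_distr_r. lra.
- destruct (HL_Xk 0 ltac:(lia)) as [L0 H0].
  destruct (HL_Xk 2 ltac:(lia)) as [L2 H2].
  destruct (HL_Xk 4 ltac:(lia)) as [L4 H4].
  assert (P0 := HL_pos_k 0 L0 H0). assert (P2 := HL_pos_k 2 L2 H2). assert (P4 := HL_pos_k 4 L4 H4).
  assert (H0' : HL xi L0). { apply (HL_ext (fun u => xi u * u ^ 0)). intros; simpl; ring. exact H0. }
  assert (HA0 := A0_val L0 H0'). assert (HA2 := A2_val L2 H2).
  assert (Hp0 := phi0_pos).
  exists (L2 / (2 * L0) + L4 / (2 * L2)), 0,
    (fun r => r * zeta 0 r / A0 - 1), (fun r => r ^ 3 * zeta 2 r / A2 - 1).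
  intros r Hr.
  assert (HA0p : 0 < A0) by (rewrite HA0; nra).
  assert (HA2p : 0 < A2) by (rewrite HA2; nra).
  assert (Hr2 : 0 < r ^ 2) by (apply pow_lt; lra).
  assert (Q0 := part2_k 0 r L0 L2 ltac:(lia) Hr H0 H2).
  assert (Q2 := part2_k 2 r L2 L4 ltac:(lia) Hr H2 H4).
  assert (X0 : 0 <= L2 / (2 * L0)) by (apply Rlt_le, Rdiv_lt_0_compat; lra).
  assert (X2 : 0 <= L4 / (2 * L2)) by (apply Rlt_le, Rdiv_lt_0_compat; lra).
  split; [|split; [|split]].
  + field. split; lra.
  + replace (r * zeta 0 r / A0 - 1) with ((r ^ (0 + 1) * zeta 0 r - 2 * phi0 * L0) / A0).
    2:{ rewrite HA0. simpl. field. split; lra. }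
    unfold Rdiv at 1. rewrite Rabs_mult, (Rabs_right (/ A0)) by (apply Rle_ge, Rlt_le, Rinv_0_lt_compat; auto).
    apply Rle_trans with (phi0 * L2 / r ^ 2 * / A0).
    { apply Rmult_le_compat_r; auto. apply Rlt_le, Rinv_0_lt_compat; auto. }
    rewrite HA0.
    apply Rle_trans with (L2 / (2 * L0) / r ^ 2).
    { right. field. repeat split; lra. }
    unfold Rdiv. apply Rmult_le_compat_r. apply Rlt_le, Rinv_0_lt_compat; auto.
    unfold Rdiv in X2. lra.
  + field. split; lra.
  + replace (r ^ 3 * zeta 2 r / A2 - 1) with ((r ^ (2 + 1) * zeta 2 r - 2 * phi0 * L2) / A2).
    2:{ rewrite HA2. simpl. field. split; lra. }
    unfold Rdiv at 1. rewrite Rabs_mult, (Rabs_right (/ A2)) by (apply Rle_ge, Rlt_le, Rinv_0_lt_compat; auto).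
    apply Rle_trans with (phi0 * L4 / r ^ 2 * / A2).
    { apply Rmult_le_compat_r; auto. apply Rlt_le, Rinv_0_lt_compat; auto. }
    rewrite HA2.
    apply Rle_trans with (L4 / (2 * L2) / r ^ 2).
    { right. field. repeat split; lra. }
    unfold Rdiv. apply Rmult_le_compat_r. apply Rlt_le, Rinv_0_lt_compat; auto.
    unfold Rdiv in X0. lra.
Qed.
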